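(* Let $G$ be a finite group and $S\in\mathcal F(G)$. (1) If $[S]$ is an idempotent of $\mathcal C(\mathcal B(G),\mathcal F(G))$, then $\pi(S)$ is a subgroup of $G$ contained in $G'$. (2) $[1_{\mathcal F(G)}]=\mathcal B(\mathsf Z(G))$. In particular, if $g\in\mathsf Z(G)$ then $g^{[\mathrm{ord}(g)]}\sim 1_{\mathcal F(G)}$. (3) $[S]$ is the smallest element of the set of idempotents of $\mathcal C(\mathcal B(G),\mathcal F(G))$ with respect to the Rees order if and only if $\pi(S)=G'$.
   Context: Let $G$ be a finite group written multiplicatively with identity $1_G$; $G'$ is its commutator subgroup and $\mathsf Z(G)$ its center. For $G_0\subset G$, $\mathcal F(G_0)$ is the free abelian monoid with basis $G_0$; its elements are sequences $S=g_1\boldsymbol{\cdot}\ldots\boldsymbol{\cdot}g_\ell$ (operation $\boldsymbol{\cdot}$ = concatenation, identity the empty sequence $1_{\mathcal F(G)}$; $g^{[k]}$ is the sequence consisting of $k$ copies of $g$). $\pi(S)=\{g_{\tau(1)}\cdots g_{\tau(\ell)}:\tau\text{ a permutation of }[1,\ell]\}$, $\pi(1_{\mathcal F(G)})=\{1_G\}$, and $\mathcal B(G_0)=\{S\in\mathcal F(G_0):1_G\in\pi(S)\}$. For $S,S'\in\mathcal F(G)$, $S\sim S'$ means: for all $T\in\mathcal F(G)$, $S\boldsymbol{\cdot}T\in\mathcal B(G)\iff S'\boldsymbol{\cdot}T\in\mathcal B(G)$; this is a congruence, $[S]$ is the class of $S$, and $\mathcal C(\mathcal B(G),\mathcal F(G))$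 is the set of classes, a commutative semigroup written additively with $[S]+[T]=[S\boldsymbol{\cdot}T]$. The Rees order on idempotents of a commutative semigroup is $e\le f$ iff $e+f=e$. *)

(* Defs.v *)
(* Sequences over G (elements of F(G)) are modelled as
   [seq gT]; all notions below are invariant under permutation. *)
From mathcomp Require Import all_boot all_order all_fingroup all_solvable.
Set Implicit Arguments. Unset Strict Implicit. Unset Printing Implicit Defensive.
Local Open Scope group_scope.

Section Seqs.
Variable gT : finGroupType.

Definition seqprod (t : seq gT) : gT := \prod_(x <- t) x.

Definition piS (S : seq gT) : {set gT} :=
  [set x | has (fun t => seqprod t == x) (permutations S)].

Definition inB (S : seq gT) : bool := 1 \in piS S.

Definition simS (S S' : seq gT) : Prop :=
  forall T : seq gT, inB (S ++ T) = inB (S' ++ T).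

Definition idemS (S : seq gT) : Prop := simS (S ++ S) S.

(* Rees order on classes: [S] <= [T] iff [S]+[T] = [S] *)
Definition reesle (S T : seq gT) : Prop := simS (S ++ T) S.
End Seqs.

(* Main.v *)
Require Import Defs.
From mathcomp Require Import all_boot all_order all_fingroup all_solvable.
From mathcomp Require Import zify.
Import Defs.
Local Open Scope group_scope.

Section Aux.
Set Implicit Arguments. Unset Strict Implicit.
Variable gT : finGroupType.
Implicit Types (s t u : seq gT) (x y : gT).
Local Notation H := [~: [set: gT], [set: gT]].

Lemma seqprod_nil : seqprod ([::] : seq gT) = 1. Proof. by rewrite /seqprod big_nil. Qed.
Lemma seqprod_cons x s : seqprod (x :: s) = x * seqprod s.
Proof. by rewrite /seqprod big_cons. Qed.
Lemma seqprod_cat s t : seqprod (s ++ t) = seqprod s * seqprod t.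
Proof. by rewrite /seqprod big_cat. Qed.

Lemma ptrans (a b c : seq gT) : perm_eq a b -> perm_eq b c -> perm_eq a c.
Proof. exact: (@perm_trans _ b a c). Qed.

Arguments ptrans {a b c}.
Lemma piSP s x : reflect (exists2 t, perm_eq t s & seqprod t = x) (x \in piS s).
Proof.
rewrite /piS inE; apply: (iffP hasP) => [[t]|[t]].
- by rewrite mem_permutations => pt /eqP <-; exists t.
- by move=> pt <-; exists t; rewrite ?mem_permutations.
Qed.

Lemma piS_self s : seqprod s \in piS s.
Proof. by apply/piSP; exists s. Qed.

Lemma piS_perm s s' : perm_eq s s' -> piS s = piS s'.
Proof.
move=> p; apply/setP=> x; apply/piSP/piSP => [[t pt <-]|[t pt <-]]; exists t => //.
- exact: ptrans pt p.
- by apply: ptrans pt _; rewrite perm_sym.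
Qed.

Lemma inB_perm s s' : perm_eq s s' -> inB s = inB s'.
Proof. by move=> p; rewrite /inB (piS_perm p). Qed.

Lemma piS_mul s t a b : a \in piS s -> b \in piS t -> a * b \in piS (s ++ t).
Proof.
move=> /piSP[s1 p1 <-] /piSP[t1 q1 <-]; apply/piSP; exists (s1 ++ t1).
  by rewrite perm_cat.
by rewrite seqprod_cat.
Qed.

Lemma perm_split p x u : perm_eq p (x :: u) ->
  exists p1 p2, p = p1 ++ x :: p2 /\ perm_eq (p1 ++ p2) u.
Proof.
move=> hp; have xp : x \in p by rewrite (perm_mem hp) mem_head.
move: hp; case/splitPr: xp => p1 p2 hp; exists p1, p2; split => //.
move/seq.permP: hp => hp; apply/seq.permP => P; have := hp P.
rewrite !count_cat /=; lia.
Qed.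

Lemma piS_nil x : (x \in piS [::]) = (x == 1).
Proof.
apply/piSP/eqP => [[t /perm_nilP -> <-]|->]; first by rewrite seqprod_nil.
by exists [::]; rewrite ?seqprod_nil.
Qed.

Lemma probe s y : inB (s ++ [:: y]) = (y^-1 \in piS s).
Proof.
apply/piSP/piSP => [[t pt e]|[t pt e]].
  have pt' : perm_eq t (y :: s).
    move/seq.permP: pt => pt; apply/seq.permP => P; have := pt P.
    rewrite !count_cat /=; lia.
  have [p1 [p2 [ht hp]]] := perm_split pt'.
  exists (p2 ++ p1); first by apply: ptrans hp; rewrite perm_catC.
  move: e; rewrite ht !seqprod_cat seqprod_cons => /eqP; rewrite -eq_invg_mul.
  move=> /eqP e. have -> : y = (seqprod p1)^-1 * (seqprod p2)^-1.
    by rewrite e mulgK.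
  by rewrite invMg !invgK.
exists (t ++ [:: y]); first by rewrite perm_cat2r.
by rewrite seqprod_cat e seqprod_cons seqprod_nil mulg1 mulVg.
Qed.

Lemma simS_piS s s' : simS s s' -> piS s = piS s'.
Proof.
move=> h; apply/setP => x.
by rewrite -[x]invgK -!probe h.
Qed.

Lemma nH x : x \in 'N(H).
Proof. exact: subsetP (normal_norm (der_normal 1 [set: gT])) x (in_setT x). Qed.

Lemma coset_conj (a c : gT) : coset H (a ^ c) = coset H a.
Proof.
have -> : a ^ c = a * [~ a, c] by rewrite commgEl mulKVg.
have h1 : coset H [~ a, c] = 1 := coset_id (mem_commg (in_setT a) (in_setT c)).
have := morphM (coset_morphism H) (nH a) (nH [~ a, c]).
by rewrite /= => ->; rewrite h1 mulg1.
Qed.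

Lemma cosetM (a b : gT) : coset H (a * b) = coset H a * coset H b.
Proof. by have := morphM (coset_morphism H) (nH a) (nH b). Qed.

Lemma seqprod_rot (a b : seq gT) : seqprod (b ++ a) = (seqprod (a ++ b)) ^ (seqprod a).
Proof. by rewrite !seqprod_cat /conjg !mulgA mulVg mul1g. Qed.

Lemma perm_coset s t : perm_eq t s -> coset H (seqprod t) = coset H (seqprod s).
Proof.
elim: s t => [|x s IH] t.
  by move/perm_nilP ->.
case/perm_consP=> i [u [hr hu]].
have e := seqprod_rot (take i t) (drop i t).
rewrite cat_take_drop in e.
rewrite -(coset_conj _ (seqprod (take i t))) -e.
have -> : drop i t ++ take i t = x :: u by [].
by rewrite !seqprod_cons !cosetM IH.
Qed.

Lemma perm_inH s t : perm_eq t s -> seqprod t \in H -> seqprod s \in H.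
Proof.
move=> p ht; apply: coset_idr; first exact: nH.
by rewrite -(perm_coset p) coset_id.
Qed.

Lemma part1 s : idemS s -> group_set (piS s) /\ piS s \subset H.
Proof.
move=> h; have eq := simS_piS h.
have mulc : {in piS s &, forall a b, a * b \in piS s}.
  by move=> a b ha hb; rewrite -eq; apply: piS_mul.
have one : 1 \in piS s.
  have pw : forall n, seqprod s ^+ n.+1 \in piS s.
    elim=> [|n IHn]; first by rewrite expg1 piS_self.
    by rewrite expgS mulc // piS_self.
  have := order_gt0 (seqprod s); have := expg_order (seqprod s).
  by case: #[_] => // n <- _.
split; first by apply/group_setP; split.
apply/subsetP => x /piSP[t pt <-].
have /piSP[t' pt' e1] := one.
apply: (perm_inH (t := t')); last by rewrite e1 group1.
by apply: ptrans pt' _; rewrite perm_sym.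
Qed.

Lemma full_coset a u : H \subset piS a -> inB (a ++ u) = (seqprod u \in H).
Proof.
move=> sH.
have aH : seqprod a \in H.
  have /piSP[t pt e] := subsetP sH 1 (group1 _).
  by apply: (perm_inH pt); rewrite e group1.
apply/idP/idP.
  case/piSP=> t pt e.
  have := perm_inH pt; rewrite e group1 seqprod_cat => /(_ isT).
  by rewrite groupMl.
move=> uH; have /piSP[t pt e] := subsetP sH _ (groupVr uH).
apply/piSP; exists (t ++ u); first by rewrite perm_cat2r.
by rewrite seqprod_cat e mulVg.
Qed.

Lemma central_cons x u y : x \in 'Z([set: gT]) ->
  (y \in piS (x :: u)) = (x^-1 * y \in piS u).
Proof.
case/centerP=> _ cx.
apply/piSP/piSP => [[t pt e]|[t pt e]].
  have [p1 [p2 [ht hp]]] := perm_split pt.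
  exists (p1 ++ p2) => //.
  move: e; rewrite ht !seqprod_cat seqprod_cons mulgA.
  rewrite -(cx (seqprod p1) (in_setT _)) -mulgA => <-.
  by rewrite mulKg.
exists (x :: t); first by rewrite perm_cons.
by rewrite seqprod_cons e mulKVg.
Qed.

Lemma central_cat s u y : all (fun g => g \in 'Z([set: gT])) s ->
  (y \in piS (s ++ u)) = ((seqprod s)^-1 * y \in piS u).
Proof.
elim: s y => [|x s IH] y /=.
  by rewrite seqprod_nil invg1 mul1g.
case/andP=> zx zs.
by rewrite central_cons // IH // seqprod_cons invMg mulgA.
Qed.

Lemma piS1 (h z : gT) : (z \in piS [:: h]) = (z == h).
Proof.
apply/piSP/eqP => [[t pt <-]|->]; last by exists [:: h]; rewrite ?seqprod_cons ?seqprod_nil ?mulg1.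
have := perm_size pt; case: t pt => [|w [|]] //= pt _.
have : w \in [:: h] by rewrite -(perm_mem pt) mem_head.
by rewrite inE => /eqP ->; rewrite seqprod_cons seqprod_nil mulg1.
Qed.

Lemma part2a s : simS s [::] <-> (all (fun g => g \in 'Z([set: gT])) s /\ inB s).
Proof.
split.
  move=> h.
  have Bs : inB s.
    have := h [::]; rewrite cats0 => ->.
    by rewrite /inB piS_nil.
  split => //.
  apply/allP => g gs; apply/centerP; split; first exact: in_setT.
  move=> h1 _; case: (eqVneq (g * h1) (h1 * g)) => // ne; exfalso.
  pose k := (g * h1 * g^-1)^-1.
  have F : inB ([::] ++ [:: h1; k]) = false.
    rewrite /= -[[:: h1; k]]/([:: h1] ++ [:: k]) probe piS1 /k invgK.
    apply/negP => /eqP e; by move: ne; rewrite -{2}e mulgKV eqxx.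
  have T : inB (s ++ [:: h1; k]).
    rewrite -[[:: h1; k]]/([:: h1] ++ [:: k]) catA probe /k invgK.
    case/piSP: Bs => t pt e.
    have gt : g \in t by rewrite (perm_mem pt).
    move: pt e; case/splitPr: gt => p1 p2 pt e.
    apply/piSP; exists (g :: h1 :: p2 ++ p1).
      move/seq.permP: pt => pt; apply/seq.permP => P; have := pt P.
      rewrite /= !count_cat /=; lia.
    move: e; rewrite seqprod_cat seqprod_cons => /eqP; rewrite -eq_invg_mul => /eqP e.
    have e2 : seqprod p2 = g^-1 * (seqprod p1)^-1 by rewrite e mulKg.
    by rewrite !seqprod_cons seqprod_cat e2 mulgKV !mulgA.
  by move: (h [:: h1; k]); rewrite T F.
case=> zs Bs T.
have e1 : seqprod s = 1.
  move: Bs; rewrite /inB -[s]cats0 central_cat // piS_nil mulg1 invg_eq1 => /eqP.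
  by rewrite cats0.
by rewrite /inB central_cat // e1 invg1 mul1g.
Qed.

Lemma part2b g : g \in 'Z([set: gT]) -> simS (nseq #[g] g) [::].
Proof.
move=> zg; apply/part2a; split; first by apply/allP => w /nseqP [-> _].
apply/piSP; exists (nseq #[g] g) => //.
have : forall n, seqprod (nseq n g) = g ^+ n.
  by elim=> [|n IHn]; rewrite ?seqprod_nil ?expg0 //= seqprod_cons IHn expgS.
by move=> ->; rewrite expg_order.
Qed.

Lemma full_aH a : H \subset piS a -> seqprod a \in H.
Proof.
move=> sH; have /piSP[t pt e] := subsetP sH 1 (group1 _).
by apply: (perm_inH pt); rewrite e group1.
Qed.

Lemma flatten_pi (bs : seq (seq gT)) : (forall b, b \in bs -> 1 \in piS b) ->
  1 \in piS (flatten bs) /\ forall b, b \in bs -> piS b \subset piS (flatten bs).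
Proof.
elim: bs => [|b bs IH] h /=.
  by split => //; rewrite piS_nil.
have [h1 h2] : 1 \in piS (flatten bs) /\ forall b, b \in bs -> piS b \subset piS (flatten bs).
  by apply: IH => c hc; apply: h; rewrite inE hc orbT.
have hb := h b (mem_head _ _).
split; first by have := piS_mul hb h1; rewrite mulg1.
move=> c; rewrite inE => /orP[/eqP ->|hc].
  by apply/subsetP => z hz; have := piS_mul hz h1; rewrite mulg1.
apply/subsetP => z hz; have := piS_mul hb (subsetP (h2 c hc) z hz).
by rewrite mul1g.
Qed.

Definition blk (x y : gT) := [:: x^-1; y^-1; x; y].

Lemma blk1 x y : 1 \in piS (blk x y).
Proof.
apply/piSP; exists [:: x^-1; x; y^-1; y].
  apply/seq.permP => P /=; lia.
by rewrite !seqprod_cons seqprod_nil !mulg1 !mulVg ?mulg1 ?mulVg.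
Qed.

Lemma blkc x y : [~ x, y] \in piS (blk x y).
Proof.
apply/piSP; exists (blk x y) => //.
by rewrite !seqprod_cons seqprod_nil !mulg1 commgEl /conjg !mulgA.
Qed.

Definition T0 := flatten [seq blk p.1 p.2 | p <- enum [set: (gT * gT)%type]].

Lemma T0_pi : 1 |: commg_set [set: gT] [set: gT] \subset piS T0.
Proof.
have [|h1 h2] := @flatten_pi [seq blk p.1 p.2 | p <- enum [set: (gT * gT)%type]].
  by move=> b /mapP[p _ ->]; apply: blk1.
  apply/subsetP => z /setU1P[-> //|/imset2P[x y _ _ ->]].
  apply: subsetP (h2 (blk x y) _) _ (blkc x y).
by apply/mapP; exists (x, y); rewrite ?mem_enum ?in_setT.
Qed.

Lemma rich : exists T, H \subset piS T.
Proof.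
have [n en] := gen_expgs (commg_set [set: gT] [set: gT]).
exists (flatten (nseq n T0)).
rewrite /commutator en.
elim: n {en} => [|n IHn].
  by rewrite expg0; apply/subsetP => z; rewrite inE => /eqP ->; rewrite /= piS_nil.
rewrite expgS; apply/subsetP => z /mulsgP[a b ha hb ->] /=.
by apply: piS_mul; [exact: subsetP T0_pi a ha| exact: subsetP IHn b hb].
Qed.
End Aux.

Theorem lemma3p7 (gT : finGroupType) :
  (* (1) *)
  (forall S : seq gT, idemS S ->
     group_set (piS S) /\ piS S \subset [~: [set: gT], [set: gT]])
  /\
  (* (2) [1_F] = B(Z(G)), and the "in particular" *)
  ((forall S : seq gT,
      simS S [::] <-> (all (fun g => g \in 'Z([set: gT])) S /\ inB S))
   /\ (forall g : gT, g \in 'Z([set: gT]) -> simS (nseq #[g] g) [::]))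
  /\
  (* (3) *)
  (forall S : seq gT,
     (idemS S /\ (forall T : seq gT, idemS T -> reesle S T))
     <-> piS S = [~: [set: gT], [set: gT]]).
Proof.
split; first exact: part1.
split; first by split; [exact: part2a | exact: part2b].
move=> S; split.
  case=> hi hmin.
  have [grp sub] := part1 hi.
  have [T rT] := rich gT.
  have idT : idemS T.
    move=> U; rewrite -catA !full_coset // seqprod_cat groupMl //.
    exact: full_aH.
  have e := simS_piS (hmin T idT).
  apply/eqP; rewrite eqEsubset sub /=; apply/subsetP => z hz.
  rewrite -e -(mul1g z); apply: piS_mul; last exact: subsetP rT z hz.
  by case/group_setP: grp.
move=> e; split.
  move=> U; rewrite -catA !full_coset ?e ?subxx // seqprod_cat groupMl //.
  by have := piS_self S; rewrite e.
move=> T idT U; rewrite -catA !full_coset ?e ?subxx // seqprod_cat groupMl //.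
have [_ sT] := part1 idT; exact: subsetP sT _ (piS_self T).
Qed.
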